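(* Let $R$ be a commutative Bézout ring and let $0\neq c\in R$. Consider: (1) for any $a,b\in R$ with $aR+bR=R$, there exist $r,s\in R$ such that $c=rs$ and $rR+sR=rR+aR=sR+bR=R$; (2) the ring $R/cR$ is clean. Then (1) implies (2). If moreover $R$ is an integral domain, then (1) and (2) are equivalent.
   Context: All rings are commutative with identity. A ring is Bézout if every finitely generated ideal is principal. A ring is clean if every element is the sum of an idempotent and a unit. *)

(* Defs.v *)
From mathcomp Require Import all_boot all_algebra.
Set Implicit Arguments. Unset Strict Implicit. Unset Printing Implicit Defensive.
Import GRing.Theory.
Local Open Scope ring_scope.

Section Defs.
Variable R : comNzRingType.

Definition in_pideal (c x : R) : Prop := exists k : R, x = c * k.

Definition in_fgideal (s : seq R) (x : R) : Prop :=
  exists t : seq R, size t = size s /\ x = \sum_(i < size s) s`_i * t`_i.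

Definition bezout_ring : Prop :=
  forall s : seq R, exists d : R, forall x, in_fgideal s x <-> in_pideal d x.

Definition comax (a b : R) : Prop := exists x y : R, a * x + b * y = 1.

(* integral domain (commutative, 1 <> 0 already built in) *)
Definition is_domain : Prop := forall x y : R, x * y = 0 -> x = 0 \/ y = 0.

(* Elements of R/cR, seen through representatives in R:
   equality in R/cR, idempotents, units of R/cR. *)
Definition eqmod (c x y : R) : Prop := in_pideal c (x - y).
Definition idem_mod (c e : R) : Prop := eqmod c (e * e) e.
Definition unit_mod (c u : R) : Prop := exists v : R, eqmod c (u * v) 1.

Definition clean_quot (c : R) : Prop :=
  forall x : R, exists e u : R, [/\ idem_mod c e, unit_mod c u & eqmod c x (e + u)].

Definition cond1 (c : R) : Prop :=
  forall a b : R, comax a b ->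
    exists r s : R, [/\ c = r * s, comax r s, comax r a & comax s b].
End Defs.

(* Main.v *)
Require Import Defs.
From mathcomp Require Import all_boot all_algebra.
From mathcomp Require Import ring.
Local Open Scope ring_scope.
Import GRing.Theory.
Set Implicit Arguments. Unset Strict Implicit.

Lemma subz (R : comNzRingType) (A B : R) : A = B -> A - B = 0.
Proof. by move=> ->; rewrite subrr. Qed.

Lemma by_res (R : comNzRingType) (l r z : R) : z = 0 -> l - r = z -> l = r.
Proof. by move=> -> /eqP; rewrite subr_eq0 => /eqP. Qed.

Lemma fg2 (R : comNzRingType) (a b x : R) :
  in_fgideal [:: a; b] x <-> exists y z, x = a * y + b * z.
Proof.
split.
  move=> [t [_ ->]]; exists t`_0, t`_1.
  by rewrite !big_ord_recl big_ord0 /= addr0.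
move=> [y [z ->]]; exists [:: y; z]; split => //.
by rewrite !big_ord_recl big_ord0 /= addr0.
Qed.

Theorem lemma3p6 (R : comNzRingType) (c : R) :
  bezout_ring R -> c != 0 ->
  (cond1 c -> clean_quot c) /\ (is_domain R -> (cond1 c <-> clean_quot c)).
Proof.
move=> Hbz Hc0.
have D1 : cond1 c -> clean_quot c.
  move=> H1 x.
  have [|r [s [Hc [p [q E2]] [al [be E1]] [ga [de E3]]]]] := H1 x (1 - x).
    by exists 1, 1; rewrite !mulr1 addrC subrK.
  move: (subz E1) (subz E2) (subz E3) => z1 z2 z3.
  exists (r * p), (x - r * p); split.
  - exists (- (p * q)); rewrite Hc.
    apply: (by_res (z := (r * p + s * q - 1) * (r * p))); first by rewrite z2 mul0r.
    ring.
  - set A := - al - x * be * p - x * de * p - p * be + p * be * r * p + p * de * r * p.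
    set B := - ga + (x - 1) * (be * q + de * q) - q * de + s * q * (be * q + de * q).
    set u' := x - 1 + s * q. set v' := - de + s * (be * q + de * q).
    exists (be * (s * q) - de * (r * p)); exists (p * B + q * A); rewrite Hc.
    apply: (by_res (z := (r * al + x * be - 1) * (s * q) +
       (r * p + s * q - 1) * (r * p * ((r * p + s * q - 1) * de - u' * de - v')
          + s * q * (x - r * p) * be
          - ((x - r * p) * (be * (s * q) - de * (r * p)) - 1)) +
       (s * ga + (1 - x) * de - 1) * (r * p))).
      by rewrite z1 z2 z3; ring.
    rewrite /A /B /u' /v'; ring.
  - by exists 0; ring.
split=> // Hdom; split=> // Hcl a b [x0 [y0 Hab]].
have [e [u [[k1 He] [v [k2 Huv]] [k3 Hx]]]] := Hcl (a * x0).
rewrite /eqmod /in_pideal in He Huv Hx.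
have [d1 Hd1] := Hbz [:: c; e].
have [d2 Hd2] := Hbz [:: c; 1 - e].
have [m1 Ec1] : exists m, c = d1 * m by apply/(Hd1 c)/fg2; exists 1, 0; ring.
have [n1 Ee1] : exists m, e = d1 * m by apply/(Hd1 e)/fg2; exists 0, 1; ring.
have [m2 Ec2] : exists m, c = d2 * m by apply/(Hd2 c)/fg2; exists 1, 0; ring.
have [n2 Ee2] : exists m, 1 - e = d2 * m by apply/(Hd2 _)/fg2; exists 0, 1; ring.
have [y1 [z1 F1]] : exists y z, d1 = c * y + e * z by apply/fg2/(Hd1 d1); exists 1; ring.
have [y2 [z2 F2]] : exists y z, d2 = c * y + (1 - e) * z by apply/fg2/(Hd2 d2); exists 1; ring.
move: (subz Ec1) (subz Ee1) (subz Ec2) (subz Ee2) (subz F1) (subz F2)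
      (subz He) (subz Huv) (subz Hx) (subz Hab) => hc1 he1 hc2 he2 hf1 hf2 hhe huv hx hab.
set t := n1 * m2 + m1 * n2.
have Ht : c = d1 * d2 * t.
  apply: (by_res (z := (c - d2 * m2) * e + (e - d1 * n1) * (d2 * m2)
     + ((1 - e) - d2 * n2) * c + (c - d1 * m1) * (d2 * n2))).
    by rewrite hc2 he1 he2 hc1; ring.
  rewrite /t; ring.
set w := y1 * c * y2 + y1 * (1 - e) * z2 + e * z1 * y2 - k1 * z1 * z2.
have Hw : d1 * d2 = c * w.
  apply: (by_res (z := (d1 - (c * y1 + e * z1)) * d2 + (c * y1 + e * z1) * (d2 - (c * y2 + (1 - e) * z2))
     - (e * e - e - c * k1) * (z1 * z2))).
    by rewrite hf1 hf2 hhe; ring.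
  rewrite /w; ring.
have Hwt : w * t = 1.
  have : c * (1 - w * t) = 0.
    apply: (by_res (z := (c - d1 * d2 * t) + (d1 * d2 - c * w) * t)).
      by rewrite (subz Ht) (subz Hw); ring.
    ring.
  case/Hdom => [Hc|].
    by move: Hc0; rewrite Hc eqxx.
  by move/eqP; rewrite subr_eq0 => /eqP <-.
have hwt := subz Hwt.
exists d1, (d2 * t); split.
- by rewrite Ht mulrA.
- exists n1, (w * n2).
  apply: (by_res (z := - (e - d1 * n1) - ((1 - e) - d2 * n2) + (w * t - 1) * (d2 * n2))).
    by rewrite he1 he2 hwt; ring.
  ring.
- exists (- (n1 * v) - m1 * (k3 * v + k2)), (x0 * v).
  apply: (by_res (z := (e - d1 * n1) * v + (c - d1 * m1) * (k3 * v + k2)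
      + (a * x0 - (e + u) - c * k3) * v + (u * v - 1 - c * k2))).
    by rewrite he1 hc1 hx huv; ring.
  ring.
- exists (w * (n2 * v - m2 * k3 * v - m2 * k2)), (- (y0 * v)).
  apply: (by_res (z := (w * t - 1) * (d2 * (n2 * v - m2 * k3 * v - m2 * k2))
      - ((1 - e) - d2 * n2) * v + (c - d2 * m2) * (k3 * v + k2)
      + (u * v - 1 - c * k2) + (a * x0 - (e + u) - c * k3) * v
      - (a * x0 + b * y0 - 1) * v)).
    by rewrite hwt he2 hc2 huv hx hab; ring.
  ring.
Qed.
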